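(* Let $n\ge 2$ and let $\mathcal{F}$ be a maximal coclique of $\Gamma_{2n}$. Any two $\mathcal{F}$-red $(n-1)$-spaces meet (have nonempty intersection). Any two $\mathcal{F}$-red $n$-spaces are not in general position, i.e. they do not meet in just a point.
   Context: $\mathrm{PG}(2n,q)$ is the projective space of projective dimension $2n$ over the field of order $q$; an $i$-space is a subspace of projective dimension $i$. An $(n-1,n)$-flag is a pair $(A,B)$ with $A$ an $(n-1)$-space, $B$ an $n$-space and $A\subseteq B$. Two such flags $(A_1,B_1),(A_2,B_2)$ are opposite if $A_1\cap B_2=A_2\cap B_1=\emptyset$. $\Gamma_{2n}$ is the graph whose vertices are the $(n-1,n)$-flags, adjacent when opposite; a maximal coclique is an inclusion-maximal set of pairwise non-opposite flags. An $n$-space or $(n-1)$-space is $\mathcal{F}$-red if it occurs in exactly $\frac{q^{n+1}-1}{q-1}$ flags of $\mathcal{F}$. Two $n$-spaces of $\mathrm{PG}(2n,q)$ are in general position if they span the whole space, equivalently meet in exactly a point. *)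

(* Defs.v *)
From HB Require Import structures.
From mathcomp Require Import all_boot all_algebra all_field.

Set Implicit Arguments.
Unset Strict Implicit.
Unset Printing Implicit Defensive.

Local Open Scope ring_scope.

(* Conventions: PG(2n,q) is modelled by the vector space 'rV[F]_(2n+1) over a
   finite field F with q = #|F| elements.  A projective i-space is a vector
   subspace of dimension i+1 ({vspace _} from mathcomp's vector.v). *)

(* The type of all subspaces of 'rV[F]_N, equipped with a finType structure
   (transported from the canonical matrix representation), so that sets of
   flags can be formed and counted. *)
Definition subsp (F : finFieldType) (N : nat) : Type := {vspace 'rV[F]_N}.
HB.instance Definition _ (F : finFieldType) (N : nat) := Choice.on (subsp F N).

Definition vs2mx_subsp (F : finFieldType) (N : nat) :
  subsp F N -> 'M[F]_(dim 'rV[F]_N) := @VectorInternalTheory.vs2mx F 'rV[F]_N.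
Definition mx2vs_subsp (F : finFieldType) (N : nat) :
  'M[F]_(dim 'rV[F]_N) -> subsp F N := @VectorInternalTheory.mx2vs F 'rV[F]_N _.
Lemma subspK (F : finFieldType) (N : nat) :
  cancel (@vs2mx_subsp F N) (@mx2vs_subsp F N).
Proof. exact: VectorInternalTheory.vs2mxK. Qed.

HB.instance Definition _ (F : finFieldType) (N : nat) := CanIsCountable (@subspK F N).
HB.instance Definition _ (F : finFieldType) (N : nat) :=
  isFinite.Build (subsp F N) (@pcan_enumP (subsp F N) _ _ _ (can_pcan (@subspK F N))).

Notation pgsp F n := (subsp F n.*2.+1).

Definition is_flag (F : finFieldType) (n : nat) (f : pgsp F n * pgsp F n) : bool :=
  [&& \dim f.1 == n, \dim f.2 == n.+1 & (f.1 <= f.2)%VS].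

Definition opposite (F : finFieldType) (n : nat) (f g : pgsp F n * pgsp F n) : bool :=
  ((f.1 :&: g.2)%VS == 0%VS) && ((g.1 :&: f.2)%VS == 0%VS).

Definition coclique (F : finFieldType) (n : nat) (FF : {set pgsp F n * pgsp F n}) : Prop :=
  (forall f, f \in FF -> is_flag f) /\
  (forall f g, f \in FF -> g \in FF -> ~~ opposite f g).

Definition maximal_coclique (F : finFieldType) (n : nat)
    (FF : {set pgsp F n * pgsp F n}) : Prop :=
  coclique FF /\ (forall GG, coclique GG -> FF \subset GG -> GG = FF).

Definition redcount (F : finFieldType) (n : nat) : nat :=
  ((#|F| ^ n.+1 - 1) %/ (#|F| - 1))%N.

Definition red_nspace (F : finFieldType) (n : nat) (FF : {set pgsp F n * pgsp F n})
    (B : pgsp F n) : Prop :=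
  \dim B = n.+1 /\ #|[set f in FF | f.2 == B]| = redcount F n.

Definition red_n1space (F : finFieldType) (n : nat) (FF : {set pgsp F n * pgsp F n})
    (A : pgsp F n) : Prop :=
  \dim A = n /\ #|[set f in FF | f.1 == A]| = redcount F n.

(* Main.v *)
Require Import Defs.
From HB Require Import structures.
From mathcomp Require Import all_boot all_algebra all_field zify.
Set Implicit Arguments. Unset Strict Implicit. Unset Printing Implicit Defensive.
Import GRing.Theory.
Local Open Scope ring_scope.

Lemma count_fibers (T Y : finType) (D : {set T}) (g : T -> Y) (X : {set Y}) (k : nat) :
  (forall t, t \in D -> k <= #|[set u in D | g u == g t]|)%N ->
  X \subset g @: D -> (#|X| * k <= #|D|)%N.
Proof.
move=> Hk HX.
have -> : #|D| = (\sum_(y in g @: D) #|[set u in D | g u == y]|)%N.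
  rewrite -sum1_card (partition_big_imset g).
  by apply: eq_bigr => y _; rewrite -sum1_card; apply: eq_bigl => u; rewrite inE.
rewrite (big_setID X) /= (setIidPr HX).
apply: leq_trans (leq_addr _ _).
rewrite -sum_nat_const; apply: leq_sum => y Hy.
have /imsetP[t Ht ->] := subsetP HX y Hy.
exact: Hk.
Qed.

Lemma vlineZ (K : fieldType) (vT : vectType K) (a : K) (v : vT) :
  a != 0 -> <[a *: v]>%VS = <[v]>%VS.
Proof.
move=> a0; apply: subv_anti; rewrite -!memvE memvZ ?memv_line //=.
by have := memvZ (a^-1) (memv_line (a *: v)); rewrite scalerA mulVf // scale1r.
Qed.

Lemma redcountE (F : finFieldType) n : (redcount F n * (#|F| - 1) = #|F| ^ n.+1 - 1)%N.
Proof.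
rewrite /redcount divnK //.
have := subn_exp #|F| 1 n.+1; rewrite exp1n => ->.
exact: dvdn_mulr.
Qed.



Lemma exists_good (F : finFieldType) n (Y T : finType) (X : {set Y}) (P : pred Y)
   (D : {set T}) (g : T -> Y) :
  #|X| = redcount F n -> (#|D| < #|F| ^ n.+1 - 1)%N ->
  (forall t, t \in D -> #|F|.-1 <= #|[set u in D | g u == g t]|)%N ->
  (forall y, y \in X -> ~~ P y -> y \in g @: D) ->
  exists2 y, y \in X & P y.
Proof.
move=> cX cD Hk Hs.
have [/existsP[y /andP[Hy Py]]|] := boolP [exists y, (y \in X) && P y].
  by exists y.
rewrite negb_exists => /forallP H.
have : X \subset g @: D.
  apply/subsetP => y Hy; apply: Hs => //; have := H y; by rewrite Hy.
move/(count_fibers Hk); rewrite cX -subn1 redcountE.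
move: cD; lia.
Qed.

Lemma scale_fiber (F : finFieldType) m (D : {set 'rV[F]_m}) (Y : eqType) (g : 'rV_m -> Y) t :
  t != 0 -> (forall a : F, a != 0 -> a *: t \in D /\ g (a *: t) = g t) ->
  (#|F|.-1 <= #|[set u in D | g u == g t]|)%N.
Proof.
move=> t0 H.
rewrite -(cardsC1 (0 : F)) -(@card_in_imset _ _ (fun a => a *: t)).
  apply: subset_leq_card; apply/subsetP => u /imsetP[a]; rewrite !inE => a0 ->.
  by have [-> ->] := H a a0; rewrite eqxx.
move=> a b _ _ /= /eqP; rewrite -subr_eq0 -scalerBl scaler_eq0 (negbTE t0) orbF subr_eq0.
by move/eqP.
Qed.

Lemma side1 (F : finFieldType) n (FF : {set pgsp F n * pgsp F n}) (A1 A2 : pgsp F n) :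
  red_n1space FF A1 -> \dim A2 = n -> (A1 :&: A2)%VS = 0%VS -> coclique FF ->
  exists2 f, f \in FF & (f.1 = A1 /\ (f.2 :&: A2)%VS = 0%VS).
Proof.
move=> [dA1 cX] dA2 cap0 [Hflag _].
pose D := [set a : 'rV[F]_(n.*2.+1) | (a \in A2) && (a != 0)].
pose g := fun a : 'rV[F]_(n.*2.+1) => ((A1 : pgsp F n), ((A1 + <[a]>)%VS : pgsp F n)).
have q1 : (1 < #|F|)%N := finNzRing_gt1 F.
have [y Hy Py] : exists2 y, y \in [set f in FF | f.1 == A1] & (y.2 :&: A2)%VS == 0%VS.
apply: (@exists_good F n _ _ [set f in FF | f.1 == A1]
   (fun f => (f.2 :&: A2)%VS == 0%VS) D g cX).
- have : (#|D| < #|A2|)%N.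
    rewrite -cardsE; apply: proper_card; apply/properP; split.
      by apply/subsetP => a; rewrite !inE => /andP[].
    by exists 0; rewrite ?mem0v // !inE eqxx andbF.
  rewrite card_vspace dA2 => h.
  have := ltn_exp2l n n.+1 q1; rewrite ltnSn => h2.
  lia.
- move=> t; rewrite inE => /andP[tA t0]; apply: scale_fiber => // a a0.
  split; last by rewrite /g vlineZ.
  by rewrite inE memvZ // scaler_eq0 negb_or a0 t0.
- case=> [B1 B2]; rewrite inE /= => /andP[Hf /eqP e1] Hc; subst B1.
  have /and3P[_ /eqP dB2 sAB] := Hflag _ Hf; rewrite /= in dB2 sAB.
  pose a := vpick (B2 :&: A2)%VS.
  have a0 : a != 0 by rewrite vpick0.
  have /memv_capP[aB aA2] : a \in (B2 :&: A2)%VS by apply: memv_pick.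
  have aA1 : a \notin A1.
    apply: contra a0 => aA1; rewrite -memv0 -cap0; exact/memv_capP.
  apply/imsetP; exists a; first by rewrite inE aA2 a0.
  rewrite /g; congr (_, _); apply/esym/eqP; rewrite eqEdim subv_add sAB -memvE aB /=.
  have h := ltn_leqif (dimv_leqif_sup (addvSl A1 <[a]>)); rewrite dA1 in h.
  rewrite dB2 h.
  apply: contra aA1 => /subvP; apply; apply: subvP (addvSr A1 <[a]>) _ (memv_line a).
have := Hy; rewrite inE => /andP[Hf2 /eqP e1]; exists y => //; split => //; exact/eqP.
Qed.
Section Hyp.
Variables (F : finFieldType) (vT : vectType F) (B : {vspace vT}).
Let X := vbasis B.
Definition sc (c : 'rV[F]_(\dim B)) (y : vT) : F := \sum_i c 0 i * coord X i y.
Definition Lc (c : 'rV[F]_(\dim B)) : 'Hom(vT, F^o) := \sum_i c 0 i *: linfun (coord X i : vT -> F^o).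
Lemma LcE c y : Lc c y = sc c y.
Proof. rewrite /Lc sum_lfunE; apply: eq_bigr => i _; rewrite scale_lfunE lfunE. by []. Qed.

Definition hyp c := (B :&: lker (Lc c))%VS.
Lemma mem_hyp c y : (y \in hyp c) = (y \in B) && (sc c y == 0).
Proof. by rewrite memv_cap memv_ker LcE. Qed.
Lemma scZ a c y : sc (a *: c) y = a * sc c y.
Proof. rewrite /sc mulr_sumr; apply: eq_bigr => i _; by rewrite mxE mulrA. Qed.
Lemma hypZ a c : a != 0 -> hyp (a *: c) = hyp c.
Proof. by move=> a0; apply/vspaceP => y; rewrite !mem_hyp scZ mulf_eq0 (negbTE a0). Qed.
Lemma hypS c : (hyp c <= B)%VS.
Proof. exact: capvSl. Qed.
Lemma sc_basis c (j : 'I_(\dim B)) : sc c X`_j = c 0 j.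
Proof.
have fX : free X := basis_free (vbasisP B).
rewrite /sc (bigD1 j) //= big1 => [|i /negPf ij]; last by rewrite coord_free // eq_sym ij mulr0.
by rewrite coord_free // eqxx mulr1 addr0.
Qed.
Lemma hyp_dim c : c != 0 -> (\dim (hyp c) < \dim B)%N.
Proof.
move=> c0.
have [j cj] : exists j, c 0 j != 0.
  apply/existsP; apply: contraR c0; rewrite negb_exists => /forallP H.
  by apply/eqP/rowP => j; rewrite mxE; have := H j; rewrite negbK => /eqP.
rewrite (ltn_leqif (dimv_leqif_sup (hypS c))).
apply/subvPn; exists X`_j.
  by apply: vbasis_mem; apply: mem_nth; rewrite size_tuple.
by rewrite mem_hyp sc_basis (negbTE cj) andbF.
Qed.
Lemma hyp_surj A : (A <= B)%VS -> (\dim A).+1 = \dim B -> exists2 c, c != 0 & hyp c = A.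
Proof.
move=> sAB dA.
pose Y := vbasis A.
pose M := \matrix_(i < \dim B, k < \dim A) coord X i Y`_k.
have K0 : kermx M != 0.
  rewrite -mxrank_eq0 mxrank_ker; have := rank_leq_col M; lia.
have [i ri] : exists i, row i (kermx M) != 0.
  apply/existsP; apply: contraR K0; rewrite negb_exists => /forallP H.
  apply/eqP/row_matrixP => i; rewrite row0; have := H i; rewrite negbK => /eqP.
  done.
have cM : row i (kermx M) *m M = 0 by rewrite -row_mul mulmx_ker row0.
exists (row i (kermx M)) => //.
set c := row i (kermx M) in ri cM *.
have sAh : (A <= hyp c)%VS.
  apply/subvP => y yA; rewrite mem_hyp (subvP sAB _ yA) /=.
  rewrite (coord_vbasis yA) /sc.
  under eq_bigr => j _ do rewrite linear_sum mulr_sumr.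
  rewrite exchange_big /= big1 // => k _.
  transitivity (coord Y k y * (c *m M) 0 k); last by rewrite cM mxE mulr0.
  rewrite !mxE mulr_sumr; apply: eq_bigr => j _; rewrite !mxE linearZ /=.
  by rewrite mulrCA.
apply/esym/eqP; rewrite eqEdim sAh /=.
have := hyp_dim ri; lia.
Qed.
End Hyp.

Lemma card_ker_bound (F : finFieldType) (k : nat) (w : 'rV[F]_k) j :
  w 0 j != 0 -> (#|[set c : 'rV[F]_k | (\sum_i c 0 i * w 0 i == 0)%R]| <= #|F| ^ k.-1)%N.
Proof.
move=> wj.
rewrite -(@card_in_imset _ _ (@col' _ 1 k j)).
  apply: leq_trans (max_card _) _; by rewrite card_mx mul1n.
move=> c d; rewrite !inE => /eqP Hc /eqP Hd e.
have eo : forall i, i != j -> c 0 i = d 0 i.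
  move=> i; case: (unliftP j i) => [i' ->|->]; last by rewrite eqxx.
  by move=> _; have := congr1 (fun M : 'M[F]_(1, k.-1) => M 0 i') e; rewrite !mxE.
apply/rowP => i0; case: (eqVneq i0 j) => [->|/eo //].
have HS : \sum_(i < k | i != j) c 0 i * w 0 i = \sum_(i < k | i != j) d 0 i * w 0 i.
  by apply: eq_bigr => i /eo ->.
rewrite (bigD1 j) //= HS in Hc; rewrite (bigD1 j) //= in Hd.
have : c 0 j * w 0 j = d 0 j * w 0 j.
  by apply: (@addIr _ (\sum_(i < k | i != j) d 0 i * w 0 i)); rewrite Hc Hd.
by move/(mulIf wj).
Qed.


Lemma side2 (F : finFieldType) n (FF : {set pgsp F n * pgsp F n}) (B1 : pgsp F n) v :
  red_nspace FF B1 -> v \in (B1 : {vspace 'rV[F]_(n.*2.+1)}) -> v != 0 -> coclique FF ->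
  exists2 f, f \in FF & (f.2 = B1 /\ v \notin (f.1 : {vspace 'rV[F]_(n.*2.+1)})).
Proof.
move=> [dB1 cX] vB v0 [Hflag _].
pose D := [set c : 'rV[F]_(\dim B1) | (c != 0) && (sc c v == 0)].
pose g := fun c : 'rV[F]_(\dim B1) => ((hyp c : pgsp F n), B1).
have q1 : (1 < #|F|)%N := finNzRing_gt1 F.
have [y Hy Py] : exists2 y, y \in [set f in FF | f.2 == B1] &
    v \notin (y.1 : {vspace 'rV[F]_(n.*2.+1)}).
apply: (@exists_good F n _ _ [set f in FF | f.2 == B1]
   (fun f => v \notin (f.1 : {vspace 'rV[F]_(n.*2.+1)})) D g cX).
- pose w := \row_i coord (vbasis B1) i v.
  have [j wj] : exists j, w 0 j != 0.
    apply/existsP; apply: contraR v0; rewrite negb_exists => /forallP H.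
    rewrite (coord_vbasis vB); apply/eqP/big1 => i _.
    by have := H i; rewrite negbK mxE => /eqP ->; rewrite scale0r.
  have h1 := card_ker_bound wj.
  have h2 : (#|D| < #|[set c : 'rV[F]_(\dim B1) | (\sum_i c 0 i * w 0 i == 0)%R]|)%N.
    apply: proper_card; apply/properP; split.
      have E : forall c : 'rV[F]_(\dim B1), \sum_i c 0 i * w 0 i = sc c v.
        by move=> c; apply: eq_bigr => i _; rewrite mxE.
      by apply/subsetP => c; rewrite !inE E => /andP[].
    by exists 0; rewrite !inE ?eqxx //; apply/eqP/big1 => i _; rewrite mxE mul0r.
  have e : (\dim B1).-1 = n by rewrite dB1.
  rewrite e in h1.
  have := ltn_exp2l n n.+1 q1; rewrite ltnSn => h3.
  have h4 := leq_trans h2 h1; move: h3 h4; clear; lia.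
- move=> t; rewrite inE => /andP[t0 tv]; apply: scale_fiber => // a a0.
  split; last by rewrite /g hypZ.
  by rewrite inE scZ mulf_eq0 (negbTE a0) tv scaler_eq0 negb_or a0 t0.
- case=> [A1 B2]; rewrite inE /= => /andP[Hf /eqP e2]; rewrite negbK => vA; subst B2.
  have /and3P[/eqP dA1 _ sAB] := Hflag _ Hf; rewrite /= in dA1 sAB.
  have [c c0 hc] := hyp_surj sAB (etrans (congr1 S dA1) (esym dB1)).
  apply/imsetP; exists c.
    by rewrite inE c0 /=; rewrite -hc mem_hyp in vA; case/andP: vA.
  by rewrite /g hc.
have := Hy; rewrite inE => /andP[Hf2 /eqP e1]; exists y => //.
Qed.

Lemma cap_key (K : fieldType) (vT : vectType K) (A B1 B2 : {vspace vT}) v :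
  (A <= B1)%VS -> (B1 :&: B2)%VS = <[v]>%VS -> v \notin A -> (A :&: B2)%VS = 0%VS.
Proof.
move=> sAB e vA; apply/eqP; rewrite -subv0; apply/subvP => w /memv_capP[wA wB].
have : w \in (B1 :&: B2)%VS by rewrite memv_cap (subvP sAB _ wA).
rewrite e => /vlineP[k ewk]; rewrite memv0.
have [k0|k0] := eqVneq k 0; first by rewrite ewk k0 scale0r.
by move: vA; rewrite -(scalerK k0 v) -ewk memvZ.
Qed.

Theorem mainTheorem5 (F : finFieldType) (n : nat) (FF : {set pgsp F n * pgsp F n}) :
  (2 <= n)%N -> maximal_coclique FF ->
  (forall A1 A2 : pgsp F n, red_n1space FF A1 -> red_n1space FF A2 ->
     (A1 :&: A2)%VS != 0%VS) /\
  (forall B1 B2 : pgsp F n, red_nspace FF B1 -> red_nspace FF B2 ->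
     \dim (B1 :&: B2)%VS != 1%N).
Proof.
move=> _ [co _]; split.
  move=> A1 A2 r1 r2; apply/negP => /eqP cap0.
  have [f1 Hf1 [e1 c1]] := side1 r1 (proj1 r2) cap0 co.
  have [f2 Hf2 [e2 c2]] := side1 r2 (proj1 r1) (etrans (capvC _ _) cap0) co.
  have := (proj2 co) f1 f2 Hf1 Hf2.
  by rewrite /opposite e1 e2 (capvC A1) c2 (capvC A2) c1 eqxx.
move=> B1 B2 r1 r2; apply/negP => /eqP d1.
pose v := vpick (B1 :&: B2)%VS.
have v0 : v != 0.
  by rewrite vpick0; apply/eqP => h; move: d1; rewrite h dimv0.
have ecap : (B1 :&: B2)%VS = <[v]>%VS.
  apply/esym/eqP; rewrite eqEdim -memvE memv_pick d1 dim_vline v0 //.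
have /memv_capP[vB1 vB2] : v \in (B1 :&: B2)%VS by apply: memv_pick.
have [f1 Hf1 [e1 c1]] := side2 r1 vB1 v0 co.
have [f2 Hf2 [e2 c2]] := side2 r2 vB2 v0 co.
have /and3P[_ _ s1] := (proj1 co) f1 Hf1.
have /and3P[_ _ s2] := (proj1 co) f2 Hf2.
rewrite e1 in s1; rewrite e2 in s2.
have := (proj2 co) f1 f2 Hf1 Hf2.
rewrite /opposite e1 e2 (cap_key s1 ecap c1) (cap_key s2 (etrans (capvC _ _) ecap) c2).
by rewrite eqxx.
Qed.
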